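(* Let $S=\mathbb{Q}[x,y]/\langle x^3+xy^2+y^3\rangle$, and let $A_1=\mathbb{Q}[x^2,xy]$ and $A_2=\mathbb{Q}[x,y^2]$ be the subalgebras of $S$ generated by the images of the indicated polynomials. Then $$A_1\cap A_2=\mathbb{Q}[\,x^2,\; x^2y^2+xy^3,\; y^4,\; xy^3,\; y^6,\; xy^5\,]\subseteq S,$$ and these six elements form a subalgebra basis of $A_1\cap A_2$ with respect to the graded reverse lexicographic order with $x>y$.
   Context: For an ideal $I$ of a polynomial ring $R$ with monomial order $<$ and a subalgebra $A\subseteq R/I$, the initial algebra $\operatorname{in}_<(A)$ is the subalgebra of $R/\operatorname{in}_<(I)$ generated by the initial terms (taken with respect to normal forms modulo $I$) of elements of $A$; a set $\{g_j\}\subseteq A$ is a subalgebra basis of $A$ if $\operatorname{in}_<(A)$ is generated by the initial terms of the $g_j$. Here $\operatorname{in}_<(I)=\langle x^3\rangle$. *)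

(* Defs.v *)
(* Q[x,y] is represented as {poly {poly rat}}:
   the outer variable is x, the inner one (coefficients) is y. *)
From mathcomp Require Import all_boot all_order all_algebra.
Set Implicit Arguments. Unset Strict Implicit. Unset Printing Implicit Defensive.
Import GRing.Theory.
Local Open Scope ring_scope.

Definition Rxy : Type := {poly {poly rat}}.
Definition X : Rxy := 'X.
Definition Y : Rxy := ('X)%:P.
Definition cst (c : rat) : Rxy := c%:P%:P.

Inductive subalg_gen (G : Rxy -> Prop) : Rxy -> Prop :=
  | sg_cst c : subalg_gen G (cst c)
  | sg_gen g : G g -> subalg_gen G g
  | sg_add p q : subalg_gen G p -> subalg_gen G q -> subalg_gen G (p + q)
  | sg_mul p q : subalg_gen G p -> subalg_gen G q -> subalg_gen G (p * q).

Definition in_ideal (f p : Rxy) : Prop := exists h : Rxy, p = h * f.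

(* p (a representative of its class in Rxy/<f>) lies in the subalgebra of
   Rxy/<f> generated by the images of G. *)
Definition subalg_mod (f : Rxy) (G : Rxy -> Prop) (p : Rxy) : Prop :=
  exists q, subalg_gen G q /\ in_ideal f (p - q).

Definition of_seq (gs : seq Rxy) : Rxy -> Prop := fun g => g \in gs.

Definition fS : Rxy := X ^+ 3 + X * Y ^+ 2 + Y ^+ 3.
(* Its initial ideal for grevlex (x > y): in(I) = <x^3>. *)
Definition inI : Rxy := X ^+ 3.

Definition grevlex_le (i j i' j' : nat) : bool :=
  (i + j < i' + j')%N || ((i + j == i' + j')%N && (j' <= j)%N).

Definition coef2 (r : Rxy) (i j : nat) : rat := (r`_i)`_j.

Definition term (c : rat) (i j : nat) : Rxy := (c *: 'X^j)%:P * 'X^i.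

Definition is_init_term (r t : Rxy) : Prop :=
  exists i j, coef2 r i j != 0 /\ t = term (coef2 r i j) i j /\
    forall i' j', coef2 r i' j' != 0 -> grevlex_le i' j' i j.

(* r is the normal form of p modulo I = <fS>: p - r in I and no monomial of
   r lies in in(I) = <x^3>, i.e. r has x-degree < 3. *)
Definition is_NF (p r : Rxy) : Prop := in_ideal fS (p - r) /\ (size r <= 3)%N.

Definition init_term (p t : Rxy) : Prop := exists r, is_NF p r /\ is_init_term r t.

(* in_<(A): subalgebra of Rxy/in(I) generated by the initial terms of
   elements of A (A given as a predicate on representatives). *)
Definition initial_algebra (A : Rxy -> Prop) : Rxy -> Prop :=
  subalg_mod inI (fun t => exists a, A a /\ init_term a t).

Definition subalg_basis (A : Rxy -> Prop) (gs : seq Rxy) : Prop :=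
  (forall g, g \in gs -> A g) /\
  (forall t, initial_algebra A t <->
             subalg_mod inI (fun t => exists g, g \in gs /\ init_term g t) t).

Definition A1gens : seq Rxy := [:: X ^+ 2; X * Y].
Definition A2gens : seq Rxy := [:: X; Y ^+ 2].
Definition Bgens : seq Rxy :=
  [:: X ^+ 2; X ^+ 2 * Y ^+ 2 + X * Y ^+ 3; Y ^+ 4; X * Y ^+ 3; Y ^+ 6; X * Y ^+ 5].

Definition A1 : Rxy -> Prop := subalg_mod fS (of_seq A1gens).
Definition A2 : Rxy -> Prop := subalg_mod fS (of_seq A2gens).
Definition A12 : Rxy -> Prop := fun p => A1 p /\ A2 p.

(* Main.v *)
Require Import Defs.
From mathcomp Require Import all_boot all_order all_algebra.
From mathcomp Require Import ring zify.
Set Implicit Arguments. Unset Strict Implicit. Unset Printing Implicit Defensive.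
Import GRing.Theory.
Local Open Scope ring_scope.

Lemma ideal0 f : in_ideal f 0.
Proof. by exists 0; rewrite mul0r. Qed.
Lemma idealD f p q : in_ideal f p -> in_ideal f q -> in_ideal f (p + q).
Proof. by move=> [a ->] [b ->]; exists (a + b); rewrite mulrDl. Qed.
Lemma idealN f p : in_ideal f p -> in_ideal f (- p).
Proof. by move=> [a ->]; exists (- a); rewrite mulNr. Qed.
Lemma idealM f p q : in_ideal f p -> in_ideal f (q * p).
Proof. by move=> [a ->]; exists (q * a); rewrite mulrA. Qed.

Section SM.
Variable (f : Rxy) (G : Rxy -> Prop).
Lemma sm_cst c : subalg_mod f G (cst c).
Proof. exists (cst c); split; first exact: sg_cst. by rewrite subrr; apply: ideal0. Qed.
Lemma sm_gen g : G g -> subalg_mod f G g.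
Proof. move=> Hg; exists g; split; first exact: sg_gen. by rewrite subrr; apply: ideal0. Qed.
Lemma sm_add p q : subalg_mod f G p -> subalg_mod f G q -> subalg_mod f G (p + q).
Proof.
move=> [a [Ha Hpa]] [b [Hb Hqb]]; exists (a + b); split; first exact: sg_add.
have -> : p + q - (a + b) = (p - a) + (q - b) by ring.
exact: idealD.
Qed.
Lemma sm_mul p q : subalg_mod f G p -> subalg_mod f G q -> subalg_mod f G (p * q).
Proof.
move=> [a [Ha Hpa]] [b [Hb Hqb]]; exists (a * b); split; first exact: sg_mul.
have -> : p * q - (a * b) = q * (p - a) + a * (q - b) by ring.
by apply: idealD; apply: idealM.
Qed.
Lemma sm_eqh p q h : subalg_mod f G q -> p - q = h * f -> subalg_mod f G p.
Proof.
move=> [a [Ha Hqa]] E; exists a; split=> //.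
have -> : p - a = (p - q) + (q - a) by ring.
by apply: idealD=> //; rewrite E; exists h.
Qed.
Lemma sm_eqi p q : subalg_mod f G q -> in_ideal f (p - q) -> subalg_mod f G p.
Proof. by move=> Hq [h E]; apply: sm_eqh Hq E. Qed.
Lemma sm_eq p q : subalg_mod f G q -> p = q -> subalg_mod f G p.
Proof. by move=> H ->. Qed.
Lemma sm_opp p : subalg_mod f G p -> subalg_mod f G (- p).
Proof.
move=> H; apply: (@sm_eq _ (cst (-1) * p)); first by apply: sm_mul=> //; apply: sm_cst.
by rewrite /cst rmorphN1 rmorphN1 mulN1r.
Qed.
Lemma sm_sum (I : eqType) (r : seq I) (F : I -> Rxy) :
  (forall i, i \in r -> subalg_mod f G (F i)) -> subalg_mod f G (\sum_(i <- r) F i).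
Proof.
elim: r => [|x r IH] H; first by rewrite big_nil; apply: (@sm_eq _ (cst 0)); [apply: sm_cst| rewrite /cst !rmorph0].
rewrite big_cons; apply: sm_add; first by apply: H; rewrite inE eqxx.
by apply: IH => i Hi; apply: H; rewrite inE Hi orbT.
Qed.
End SM.

Lemma sm_sub f (G G' : Rxy -> Prop) p :
  (forall g, G g -> subalg_mod f G' g) -> subalg_mod f G p -> subalg_mod f G' p.
Proof.
move=> HG [q [Hq Hpq]]; apply: (sm_eqi _ Hpq).
elim: Hq => {q Hpq} [c|g Hg|a b _ Ha _ Hb|a b _ Ha _ Hb].
- exact: sm_cst.
- exact: HG.
- exact: sm_add.
- exact: sm_mul.
Qed.


Definition mono (i j : nat) : Rxy := X ^+ i * Y ^+ j.

Lemma monoE i j : mono i j = ('X^j)%:P * 'X^i.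
Proof. by rewrite /mono /X /Y rmorphXn mulrC. Qed.

Lemma termE c i j : term c i j = cst c * mono i j.
Proof. by rewrite /term monoE /cst mulrA -polyCM (mul_polyC c). Qed.

Lemma coef2_mono a b i j : coef2 (mono a b) i j = ((i == a) && (j == b))%:R.
Proof.
rewrite /coef2 monoE coefCM coefXn.
case: (i == a); last by rewrite mulr0 coef0.
by rewrite mulr1 coefXn.
Qed.

Lemma coef2_cst c i j : coef2 (cst c) i j = if (i == 0%N) && (j == 0%N) then c else 0.
Proof. rewrite /coef2 /cst coefC; case: (i == 0%N); first by rewrite coefC. by rewrite coef0. Qed.

Lemma coef2D p q i j : coef2 (p + q) i j = coef2 p i j + coef2 q i j.
Proof. by rewrite /coef2 !coefD. Qed.
Lemma coef2N p i j : coef2 (- p) i j = - coef2 p i j.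
Proof. by rewrite /coef2 !coefN. Qed.
Lemma coef2B p q i j : coef2 (p - q) i j = coef2 p i j - coef2 q i j.
Proof. by rewrite /coef2 !coefB. Qed.
Lemma coef2CM c p i j : coef2 (cst c * p) i j = c * coef2 p i j.
Proof. by rewrite /coef2 /cst !coefCM. Qed.

Lemma coef2M p q i j : coef2 (p * q) i j != 0 ->
  exists k l, [/\ (k <= i)%N, (l <= j)%N, coef2 p k l != 0 & coef2 q (i - k) (j - l) != 0].
Proof.
move=> Hnz.
case: (boolP [exists k : 'I_i.+1, exists l : 'I_j.+1,
   (coef2 p k l != 0) && (coef2 q (i - k) (j - l) != 0)]).
  move=> /existsP [k /existsP [l /andP [H1 H2]]].
  by exists k, l; split=> //; rewrite -ltnS ltn_ord.
rewrite negb_exists => /forallP Hall.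
move: Hnz; rewrite /coef2 coefM coef_sum big1 ?eqxx //= => k _.
rewrite coefM big1 // => l _.
move: (Hall k); rewrite negb_exists => /forallP /(_ l).
rewrite negb_and !negbK /coef2 => /orP [/eqP H | /eqP H]; by rewrite H ?mul0r ?mulr0.
Qed.

Definition supp_in (P : nat -> nat -> bool) (p : Rxy) :=
  forall i j, coef2 p i j != 0 -> P i j.

Lemma supp_add P p q : supp_in P p -> supp_in P q -> supp_in P (p + q).
Proof.
move=> Hp Hq i j; rewrite coef2D.
case: (boolP (coef2 p i j == 0)) => [/eqP ->|/Hp //]; rewrite add0r; exact: Hq.
Qed.
Lemma supp_opp P p : supp_in P p -> supp_in P (- p).
Proof. by move=> Hp i j; rewrite coef2N oppr_eq0; apply: Hp. Qed.
Lemma supp_cstM P c p : supp_in P p -> supp_in P (cst c * p).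
Proof.
move=> Hp i j; rewrite coef2CM.
case: (boolP (coef2 p i j == 0)) => [/eqP ->|/Hp //]; by rewrite mulr0 eqxx.
Qed.
Lemma supp_mono (P : nat -> nat -> bool) a b : P a b -> supp_in P (mono a b).
Proof.
move=> H i j; rewrite coef2_mono.
by case: (boolP ((i == a) && (j == b))) => [/andP [/eqP -> /eqP ->]|]; rewrite ?eqxx.
Qed.
Lemma supp_cst (P : nat -> nat -> bool) c : P 0%N 0%N -> supp_in P (cst c).
Proof.
move=> H i j; rewrite coef2_cst.
by case: (boolP ((i == 0%N) && (j == 0%N))) => [/andP [/eqP -> /eqP ->]|]; rewrite ?eqxx.
Qed.
Lemma supp_mul (P Q R : nat -> nat -> bool) p q :
  supp_in P p -> supp_in Q q ->
  (forall k l a b, P k l -> Q a b -> R (k + a)%N (l + b)%N) -> supp_in R (p * q).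
Proof.
move=> Hp Hq HR i j /coef2M [k [l [Hk Hl H1 H2]]].
by have := HR _ _ _ _ (Hp _ _ H1) (Hq _ _ H2); rewrite !subnKC.
Qed.


Lemma decomp (p : Rxy) : p = \sum_(i < size p) \sum_(j < size p`_i) cst (coef2 p i j) * mono i j.
Proof.
rewrite -{1}[p]coefK poly_def; apply: eq_bigr => i _.
under eq_bigr do rewrite -termE /term.
rewrite -mulr_suml -rmorph_sum -poly_def coefK mul_polyC //.
Qed.

Lemma sm_supp f G (P : nat -> nat -> bool) (p : Rxy) : supp_in P p ->
  (forall i j, P i j -> subalg_mod f G (mono i j)) -> subalg_mod f G p.
Proof.
move=> Hs Hm; rewrite (decomp p); apply: sm_sum => i _; apply: sm_sum => j _.
case: (boolP (coef2 p i j == 0)) => [/eqP ->|/Hs Hij].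
  apply: (@sm_eq _ _ _ (cst 0)); first exact: sm_cst.
  by rewrite /cst !rmorph0 mul0r.
by apply: sm_mul; [apply: sm_cst| apply: Hm].
Qed.


Definition P1 (i j : nat) : bool := ((i + j) %% 2 == 0)%N && (j <= i)%N.
Definition P2 (i j : nat) : bool := (j %% 2 == 0)%N.
Definition E (i j : nat) : bool :=
  [&& ((i + j) %% 2 == 0)%N, ~~ ((i == 1%N) && (j == 1%N)) & ~~ ((i == 0%N) && (j == 2%N))].

Lemma mono_split a b c d : mono (a + c) (b + d) = mono a b * mono c d.
Proof. rewrite /mono !exprD; ring. Qed.

Lemma sg_A1 q : subalg_gen (of_seq A1gens) q -> supp_in P1 q.
Proof.
elim=> {q} [c|g|p q _ Hp _ Hq|p q _ Hp _ Hq].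
- by apply: supp_cst.
- rewrite /of_seq /A1gens !inE => /orP [/eqP ->|/eqP ->].
    have -> : X ^+ 2 = mono 2 0 by rewrite /mono; ring.
    exact: supp_mono.
  have -> : X * Y = mono 1 1 by rewrite /mono; ring.
  exact: supp_mono.
- exact: supp_add.
- apply: (supp_mul Hp Hq) => k l a b; rewrite /P1; lia.
Qed.

Lemma sg_A2 q : subalg_gen (of_seq A2gens) q -> supp_in P2 q.
Proof.
elim=> {q} [c|g|p q _ Hp _ Hq|p q _ Hp _ Hq].
- by apply: supp_cst.
- rewrite /of_seq /A2gens !inE => /orP [/eqP ->|/eqP ->].
    have -> : X = mono 1 0 by rewrite /mono; ring.
    exact: supp_mono.
  have -> : Y ^+ 2 = mono 0 2 by rewrite /mono; ring.
  exact: supp_mono.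
- exact: supp_add.
- apply: (supp_mul Hp Hq) => k l a b; rewrite /P2; lia.
Qed.

Lemma fS_supp : supp_in (fun i j => (i + j == 3)%N) fS.
Proof.
have -> : fS = mono 3 0 + mono 1 2 + mono 0 3 by rewrite /fS /mono; ring.
by apply: supp_add; [apply: supp_add|]; apply: supp_mono.
Qed.

Lemma A12_key p : A12 p -> exists q1, in_ideal fS (p - q1) /\ supp_in E q1.
Proof.
move=> [[q1 [H1 [h1 E1]]] [q2 [H2 [h2 E2]]]].
exists q1; split; first by exists h1.
have S1 := sg_A1 H1; have S2 := sg_A2 H2.
have Ed : q1 - q2 = (h2 - h1) * fS.
  have -> : q1 - q2 = (p - q2) - (p - q1) by ring.
  by rewrite E1 E2; ring.
move=> i j Hnz; have := S1 _ _ Hnz; rewrite /P1 /E => /andP [Hev Hji].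
apply/and3P; split => //; last by apply/negP => /andP [/eqP Hi /eqP Hj]; subst; lia.
apply/negP => /andP [/eqP Hi /eqP Hj]; subst i j.
have Hq2 : coef2 q2 1 1 = 0.
  by apply/eqP; apply: contraT => /S2.
have : coef2 ((h2 - h1) * fS) 1 1 != 0 by rewrite -Ed coef2B Hq2 subr0.
move=> /coef2M [k [l [Hk Hl _ Hf]]].
move: (fS_supp Hf); lia.
Qed.

Lemma genB g : g \in Bgens -> subalg_mod fS (of_seq Bgens) g.
Proof. by move=> H; apply: sm_gen. Qed.

Ltac gB := apply: genB; by rewrite /Bgens !inE eqxx ?orbT.

Lemma monoB i j : E i j -> subalg_mod fS (of_seq Bgens) (mono i j).
Proof.
move: (leqnn (i + j)); move: {2}(i + j)%N => n.
elim: n i j => [|n IH] i j.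
  move=> H0 _; have -> : i = 0%N by lia. have -> : j = 0%N by lia.
  apply: (@sm_eq _ _ _ (cst 1)); first exact: sm_cst.
  by rewrite /mono /cst !rmorph1; ring.
move=> Hn HE.
have IH' : forall a b, (a + b < i + j)%N -> E a b -> subalg_mod fS (of_seq Bgens) (mono a b).
  move=> a b Hab; apply: IH; lia.
move: HE; rewrite /E => HE.
have [Hd8|Hd8] := leqP 8 (i + j).
  have [Hj4|Hj4] := leqP 4 j.
    have -> : mono i j = mono 0 4 * mono i (j - 4) by rewrite -mono_split; congr mono; lia.
    apply: sm_mul; first by apply: IH'; rewrite /E; lia.
    by apply: IH'; rewrite /E; lia.
  have -> : mono i j = mono 4 0 * mono (i - 4) j by rewrite -mono_split; congr mono; lia.
  apply: sm_mul; first by apply: IH'; rewrite /E; lia.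
  by apply: IH'; rewrite /E; lia.
have [Hd6|Hd6] := eqVneq (i + j)%N 6%N.
  have [Hi2|Hi2] := leqP 2 i.
    have -> : mono i j = mono 2 0 * mono (i - 2) j by rewrite -mono_split; congr mono; lia.
    apply: sm_mul; first by apply: IH'; rewrite /E; lia.
    by apply: IH'; rewrite /E; lia.
  have [Hi0|Hi] := eqVneq i 0%N.
    have -> : j = 6%N by lia. rewrite Hi0.
    have -> : mono 0 6 = Y ^+ 6 by rewrite /mono; ring.
    gB.
  have -> : i = 1%N by lia. have -> : j = 5%N by lia.
  have -> : mono 1 5 = X * Y ^+ 5 by rewrite /mono; ring.
  gB.
have [Hd4|Hd4] := eqVneq (i + j)%N 4%N.
  case: i Hd4 {Hn IH IH' Hd8 Hd6 HE} => [|[|[|[|[|i]]]]] Hd4 /=.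
  - have -> : j = 4%N by lia.
    have -> : mono 0 4 = Y ^+ 4 by rewrite /mono; ring.
    gB.
  - have -> : j = 3%N by lia.
    have -> : mono 1 3 = X * Y ^+ 3 by rewrite /mono; ring.
    gB.
  - have -> : j = 2%N by lia.
    apply: (@sm_eq _ _ _ ((X ^+ 2 * Y ^+ 2 + X * Y ^+ 3) + cst (-1) * (X * Y ^+ 3))).
      by apply: sm_add; [gB|apply: sm_mul; [apply: sm_cst|gB]].
    by rewrite /mono /cst !rmorphN1; ring.
  - have -> : j = 1%N by lia.
    apply: (@sm_eqh _ _ _ (cst (-1) * (X * Y ^+ 3) + cst (-1) * Y ^+ 4) Y).
      by apply: sm_add; apply: sm_mul; [apply: sm_cst|gB|apply: sm_cst|gB].
    by rewrite /mono /cst /fS !rmorphN1; ring.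
  - have -> : j = 0%N by lia.
    apply: (@sm_eq _ _ _ (X ^+ 2 * X ^+ 2)); first by apply: sm_mul; gB.
    by rewrite /mono; ring.
  - lia.
have [Hd2|Hd2] := eqVneq (i + j)%N 2%N.
  have -> : i = 2%N by lia. have -> : j = 0%N by lia.
  have -> : mono 2 0 = X ^+ 2 by rewrite /mono; ring.
  gB.
have -> : i = 0%N by lia. have -> : j = 0%N by lia.
apply: (@sm_eq _ _ _ (cst 1)); first exact: sm_cst.
by rewrite /mono /cst !rmorph1; ring.
Qed.


Ltac gA1 := apply: sm_gen; by rewrite /of_seq /A1gens !inE eqxx ?orbT.
Ltac gA2 := apply: sm_gen; by rewrite /of_seq /A2gens !inE eqxx ?orbT.
Ltac smm2 := first [gA2 | apply: sm_mul; smm2].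
Ltac cstm := apply: sm_mul; first by apply: sm_cst.
Ltac fin := rewrite /cst /fS !rmorphN1; ring.

Lemma Y4_A1 : A1 (Y ^+ 4).
Proof.
apply: (@sm_eqh _ _ _ (X^+2 * X^+2 + (X * Y) * (X * Y) + cst (-1) * (X^+2 * (X * Y))) (Y - X)).
  apply: sm_add; first by apply: sm_add; apply: sm_mul; gA1.
  by cstm; apply: sm_mul; gA1.
fin.
Qed.

Lemma B_A1 g : g \in Bgens -> A1 g.
Proof.
rewrite /Bgens !inE => /or4P [/eqP ->|/eqP ->|/eqP ->|/or3P [/eqP ->|/eqP ->|/eqP ->]].
- gA1.
- apply: (@sm_eqh _ _ _ (cst (-1) * (X^+2 * X^+2)) X); last by fin.
  by cstm; apply: sm_mul; gA1.
- exact: Y4_A1.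
- apply: (@sm_eqh _ _ _ (cst (-1) * (X^+2 * X^+2) + cst (-1) * ((X*Y) * (X*Y))) X); last by fin.
  by apply: sm_add; cstm; apply: sm_mul; gA1.
- apply: (@sm_eqh _ _ _ (cst (-1) * ((X*Y) * (X*Y) * (X*Y)) + X^+2 * ((X*Y)*(X*Y)) + X^+2 * Y^+4) (Y^+3 - X * Y^+2)); last by fin.
  apply: sm_add; first apply: sm_add.
  + by cstm; apply: sm_mul; first apply: sm_mul; gA1.
  + by apply: sm_mul; last apply: sm_mul; gA1.
  + by apply: sm_mul; [gA1|exact: Y4_A1].
- apply: (@sm_eqh _ _ _ (cst (-1) * (X^+2 * ((X*Y)*(X*Y))) + cst (-1) * (X^+2 * Y^+4)) (X * Y^+2)); last by fin.
  apply: sm_add; cstm.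
  + by apply: sm_mul; last apply: sm_mul; gA1.
  + by apply: sm_mul; [gA1|exact: Y4_A1].
Qed.

Lemma B_A2 g : g \in Bgens -> A2 g.
Proof.
rewrite /Bgens !inE => /or4P [/eqP ->|/eqP ->|/eqP ->|/or3P [/eqP ->|/eqP ->|/eqP ->]].
- apply: (@sm_eq _ _ _ (X * X)); [by apply: sm_mul; gA2|ring].
- apply: (@sm_eqh _ _ _ (cst (-1) * (X * X * X * X)) X); last by fin.
  by cstm; smm2.
- apply: (@sm_eq _ _ _ (Y^+2 * Y^+2)); [by apply: sm_mul; gA2|ring].
- apply: (@sm_eqh _ _ _ (cst (-1) * (X * X * X * X) + cst (-1) * (X * X * Y^+2)) X); last by fin.
  by apply: sm_add; cstm; smm2.
- apply: (@sm_eq _ _ _ (Y^+2 * Y^+2 * Y^+2)); [by smm2|ring].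
- apply: (@sm_eqh _ _ _ (cst (-1) * (X * X * X * X * Y^+2) + cst (-1) * (X * X * Y^+2 * Y^+2)) (X * Y^+2)); last by fin.
  by apply: sm_add; cstm; smm2.
Qed.

Lemma part1 p : A12 p <-> subalg_mod fS (of_seq Bgens) p.
Proof.
split.
  move=> /A12_key [q1 [Hi Hs]]; apply: (sm_eqi _ Hi).
  by apply: (sm_supp Hs) => i j; apply: monoB.
move=> H; split; apply: (sm_sub _ H) => g Hg.
  exact: B_A1.
exact: B_A2.
Qed.


Lemma size_fS : size fS = 4%N.
Proof.
rewrite /fS -addrA size_polyDl /X ?size_polyXn //.
rewrite ltnS; apply/leq_sizeP => k Hk.
rewrite /Y coefD coefXM -!rmorphXn coefC.
case: k Hk => [|k] Hk //=; rewrite coefC; case: k Hk => //= k _; by rewrite addr0.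
Qed.

Lemma nf_unique (r1 r2 : Rxy) : (size r1 <= 3)%N -> (size r2 <= 3)%N ->
  in_ideal fS (r1 - r2) -> r1 = r2.
Proof.
move=> H1 H2 [h Eh].
have [h0|hn0] := eqVneq h 0.
  by apply/eqP; rewrite -subr_eq0 Eh h0 mul0r.
have fn0 : fS != 0 by rewrite -size_poly_gt0 size_fS.
have := size_mul hn0 fn0; rewrite -Eh size_fS.
have : (size (r1 - r2)%R <= 3)%N.
  by apply/leq_sizeP => k Hk; rewrite coefB; move/leq_sizeP: H1 => -> //; move/leq_sizeP: H2 => -> //; rewrite subr0.
have : (0 < size h)%N by rewrite size_poly_gt0.
move=> A B C; rewrite C addnS /= in B; move: B; rewrite -{2}[3%N]add0n leq_add2r leqn0 => /eqP Hs; by rewrite Hs in A.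
Qed.

Lemma size_mono i j : (i < 3)%N -> (size (mono i j) <= 3)%N.
Proof.
move=> Hi; apply/leq_sizeP => k Hk; rewrite monoE coefCM coefXn.
have /negbTE -> : k != i by lia.
by rewrite mulr0.
Qed.

Definition NFQ (p : Rxy) := exists r, [/\ in_ideal fS (p - r), (size r <= 3)%N & supp_in E r].

Lemma NFQ_add p q : NFQ p -> NFQ q -> NFQ (p + q).
Proof.
move=> [r1 [I1 S1 E1]] [r2 [I2 S2 E2]]; exists (r1 + r2); split.
- have -> : p + q - (r1 + r2) = (p - r1) + (q - r2) by ring.
  exact: idealD.
- apply/leq_sizeP => k Hk; rewrite coefD.
  by move/leq_sizeP: S1 => -> //; move/leq_sizeP: S2 => -> //; rewrite addr0.
- exact: supp_add.
Qed.

Lemma NFQ_cstM c p : NFQ p -> NFQ (cst c * p).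
Proof.
move=> [r [I1 S1 E1]]; exists (cst c * r); split.
- by rewrite -mulrBr; apply: idealM.
- apply/leq_sizeP => k Hk; rewrite /cst coefCM.
  by move/leq_sizeP: S1 => -> //; rewrite mulr0.
- exact: supp_cstM.
Qed.

Lemma NFQ_opp p : NFQ p -> NFQ (- p).
Proof.
move=> H; have -> : - p = cst (-1) * p by rewrite /cst !rmorphN1 mulN1r.
exact: NFQ_cstM.
Qed.

Lemma NFQ0 : NFQ 0.
Proof.
exists 0; split; first by rewrite subrr; apply: ideal0.
  by rewrite size_poly0.
by move=> i j; rewrite /coef2 !coef0 eqxx.
Qed.

Lemma nf_mono i j : E i j -> NFQ (mono i j).
Proof.
move: (leqnn i); move: {2}i => n; elim: n i j => [|n IH] i j Hn HE.
  exists (mono i j); split; [by rewrite subrr; apply: ideal0|apply: size_mono; lia|exact: supp_mono].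
have [Hi3|Hi3] := ltnP i 3.
  exists (mono i j); split; [by rewrite subrr; apply: ideal0|exact: size_mono|exact: supp_mono].
have [i' Ei] : exists i', i = (i' + 3)%N by exists (i - 3)%N; lia.
subst i.
have [r1 [I1 S1 E1]] := IH (i' + 1)%N (j + 2)%N ltac:(lia) ltac:(move: HE; rewrite /E; lia).
have [r2 [I2 S2 E2]] := IH i' (j + 3)%N ltac:(lia) ltac:(move: HE; rewrite /E; lia).
exists (- r1 - r2); split.
- have -> : mono (i' + 3) j - (- r1 - r2) =
     mono i' j * fS - (mono (i' + 1) (j + 2) - r1) - (mono i' (j + 3) - r2).
    by rewrite /mono /fS !exprD; ring.
  apply: idealD; first apply: idealD.
  + by exists (mono i' j).
  + exact: idealN.
  + exact: idealN.
- apply/leq_sizeP => k Hk; rewrite coefB coefN.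
  move/leq_sizeP: S1 => -> //; move/leq_sizeP: S2 => -> //. by rewrite subr0 oppr0.
- by apply: (@supp_add E (- r1) (- r2)); apply: supp_opp.
Qed.

Lemma supp_ind (Q : Rxy -> Prop) (P : nat -> nat -> bool) p :
  Q 0 -> (forall a b, Q a -> Q b -> Q (a + b)) ->
  (forall c i j, P i j -> Q (cst c * mono i j)) -> supp_in P p -> Q p.
Proof.
move=> Q0 QD Qm Hs; rewrite (decomp p).
apply: big_ind => // i _; apply: big_ind => // j _.
case: (boolP (coef2 p i j == 0)) => [/eqP ->|/Hs Hij]; last exact: Qm.
by rewrite /cst !rmorph0 mul0r.
Qed.

Lemma nf_supp q : supp_in E q -> NFQ q.
Proof.
apply: supp_ind; [exact: NFQ0|exact: NFQ_add|].
by move=> c i j H; apply: NFQ_cstM; apply: nf_mono.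
Qed.


Definition Gp (t : Rxy) := exists g, g \in Bgens /\ init_term g t.

Lemma Gp_mono g a b : g \in Bgens -> g = mono a b -> (a < 3)%N -> Gp (mono a b).
Proof.
move=> Hg Eg Ha; exists g; split => //; exists g; split.
  by split; [rewrite subrr; apply: ideal0|rewrite Eg; apply: size_mono].
exists a, b; rewrite Eg coef2_mono !eqxx /=; split => //; split.
- by rewrite termE /cst !rmorph1 mul1r.
- move=> i' j'; rewrite coef2_mono.
  case: (boolP ((i' == a) && (j' == b))) => [/andP [/eqP -> /eqP ->] _|_].
    by rewrite /grevlex_le; lia.
  by rewrite eqxx.
Qed.

Lemma Gp_g2 : Gp (mono 2 2).
Proof.
exists (X ^+ 2 * Y ^+ 2 + X * Y ^+ 3); split; first by rewrite /Bgens !inE eqxx ?orbT.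
have Eg : X ^+ 2 * Y ^+ 2 + X * Y ^+ 3 = mono 2 2 + mono 1 3 by rewrite /mono; ring.
exists (X ^+ 2 * Y ^+ 2 + X * Y ^+ 3); split.
  split; first by rewrite subrr; apply: ideal0.
  apply/leq_sizeP => k Hk; rewrite Eg coefD.
  by move/leq_sizeP: (size_mono 2 (isT : (2 < 3)%N)) => -> //; move/leq_sizeP: (size_mono 3 (isT : (1 < 3)%N)) => -> //; rewrite addr0.
exists 2%N, 2%N; rewrite Eg coef2D !coef2_mono /= addr0; split => //; split.
- by rewrite termE /cst !rmorph1 mul1r.
- move=> i' j'; rewrite coef2D !coef2_mono.
  case: (boolP ((i' == 2%N) && (j' == 2%N))) => [/andP [/eqP -> /eqP ->] _|_].
    by rewrite /grevlex_le; lia.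
  case: (boolP ((i' == 1%N) && (j' == 3%N))) => [/andP [/eqP -> /eqP ->] _|_].
    by rewrite /grevlex_le; lia.
  by rewrite addr0 eqxx.
Qed.

Ltac gG g := apply: sm_gen; apply: (@Gp_mono g); [by rewrite /Bgens !inE eqxx ?orbT|by rewrite /mono; ring|by []].

Lemma mono_inI i j : E i j -> (i < 3)%N -> subalg_mod inI Gp (mono i j).
Proof.
move: (leqnn j); move: {2}j => n; elim: n i j => [|n IH] i j Hn HE Hi.
  have -> : j = 0%N by lia.
  have [->|Hi0] := eqVneq i 0%N.
    apply: (@sm_eq _ _ _ (cst 1)); first exact: sm_cst.
    by rewrite /mono /cst !rmorph1; ring.
  have -> : i = 2%N by move: HE; rewrite /E; lia.
  gG (X ^+ 2).
have [Hj8|Hj8] := leqP 7 j.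
  have -> : mono i j = mono i (j - 4) * mono 0 4 by rewrite -mono_split; congr mono; lia.
  apply: sm_mul; first by apply: IH => //; [lia|move: HE; rewrite /E; lia].
  gG (Y ^+ 4).
move: HE; rewrite /E => HE.
case: i Hi HE {Hn} => [|[|[|i]]] Hi HE //.
- case: j Hj8 HE => [|[|[|[|[|[|[|j]]]]]]] Hj8 HE //.
  + apply: (@sm_eq _ _ _ (cst 1)); first exact: sm_cst.
    by rewrite /mono /cst !rmorph1; ring.
  + gG (Y ^+ 4).
  + gG (Y ^+ 6).
- case: j Hj8 HE => [|[|[|[|[|[|[|j]]]]]]] Hj8 HE //.
  + gG (X * Y ^+ 3).
  + gG (X * Y ^+ 5).
- case: j Hj8 HE => [|[|[|[|[|[|[|j]]]]]]] Hj8 HE //.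
  + gG (X ^+ 2).
  + exact: sm_gen Gp_g2.
  + have -> : mono 2 4 = mono 2 0 * mono 0 4 by rewrite -mono_split.
    by apply: sm_mul; [gG (X ^+ 2)|gG (Y ^+ 4)].
  + have -> : mono 2 6 = mono 2 2 * mono 0 4 by rewrite -mono_split.
    by apply: sm_mul; [exact: sm_gen Gp_g2|gG (Y ^+ 4)].
Qed.


Lemma init_Gp a t : A12 a -> init_term a t -> subalg_mod inI Gp t.
Proof.
move=> /A12_key [q1 [Iq Sq]] [r [[Ir Sr] [i [j [Hnz [Et _]]]]]].
have [r' [Ir' Sr' Er']] := nf_supp Sq.
have Err : r = r'.
  apply: nf_unique => //.
  have -> : r - r' = - (a - r) + (a - q1) + (q1 - r') by ring.
  apply: idealD; first apply: idealD.
  - exact: idealN.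
  - exact: Iq.
  - exact: Ir'.
subst r'.
have HE := Er' _ _ Hnz.
have Hi : (i < 3)%N.
  rewrite ltnNge; apply/negP => Hi; move: Hnz; rewrite /coef2.
  by move/leq_sizeP: Sr => -> //; rewrite coef0 eqxx.
rewrite Et termE; apply: sm_mul; first exact: sm_cst.
exact: mono_inI.
Qed.

Theorem mainTheorem2 :
  (forall p : Rxy, A12 p <-> subalg_mod fS (of_seq Bgens) p) /\
  subalg_basis A12 Bgens.
Proof.
split; first exact: part1.
split.
  by move=> g Hg; apply/part1; apply: sm_gen.
move=> t; split.
  apply: sm_sub => t0 [a [Ha Hi]]; exact: init_Gp Ha Hi.
apply: sm_sub => t0 [g [Hg Hi]]; apply: sm_gen; exists g; split => //.
by apply/part1; apply: sm_gen.
Qed.
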